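(* Let $\Phi(x,y)=-\phi(x-y)$ and let $f:\mathbb R^n\to\mathbb R$ be continuously differentiable. Then $f$ is a-weakly convex if and only if $f$ is left $\Phi$-convex.
   Context: Standing assumption: $\phi:\mathbb R^n\to\mathbb R$ is convex, finite-valued, differentiable and strictly convex (Legendre with full domain), super-coercive; $\phi^*$ has the same properties and $\nabla\phi^*=(\nabla\phi)^{-1}$. A proper lsc $f$ is a-weakly convex if for every $(\bar x,\bar v)\in\operatorname{graph}\partial f$ ($\partial f$ the limiting subdifferential): $f(x)\ge f(\bar x)-\phi(x-\bar x+\nabla\phi^*(-\bar v))+\phi(\nabla\phi^*(-\bar v))$ for all $x$. Left $\Phi$-convex: $f=\sup_{i\in I}\Phi(\cdot,y_i)-\beta_i$ for some family $(y_i,\beta_i)\in\mathbb R^n\times\overline{\mathbb R}$. *)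

(* Defs.v *)
From HB Require Import structures.
From mathcomp Require Import all_boot all_order all_algebra.
From mathcomp Require Import all_classical all_reals all_analysis.
Set Implicit Arguments. Unset Strict Implicit. Unset Printing Implicit Defensive.
Import Order.TTheory GRing.Theory Num.Theory.
Import numFieldNormedType.Exports.
Local Open Scope classical_set_scope.
Local Open Scope ring_scope.

Section Defs.
Variables (R : realType) (n : nat).
Local Notation V := 'rV[R]_n.

Definition dotv (u v : V) : R := \sum_(i < n) u ord0 i * v ord0 i.

Definition grad (f : V -> R) (x : V) : V :=
  \row_(i < n) ('d f x (delta_mx ord0 i : V)).

Definition C1 (f : V -> R) : Prop :=
  (forall x, differentiable f x) /\ continuous (grad f).

Definition convex_fun (f : V -> R) : Prop :=
  forall (x y : V) (t : R), 0 <= t <= 1 ->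
    f (t *: x + (1 - t) *: y) <= t * f x + (1 - t) * f y.

Definition strictly_convex_fun (f : V -> R) : Prop :=
  forall (x y : V) (t : R), x != y -> 0 < t < 1 ->
    f (t *: x + (1 - t) *: y) < t * f x + (1 - t) * f y.

(* super-coercive: f x / |x| -> +oo as |x| -> +oo *)
Definition supercoercive (f : V -> R) : Prop :=
  forall M : R, exists r : R, forall x : V, r < `|x| -> M * `|x| <= f x.

Definition fenchel_conj (f : V -> R) (v : V) : \bar R :=
  ereal_sup [set ((dotv v x - f x)%:E) | x in [set: V]].

(* convex, finite, differentiable, strictly convex (Legendre with full
   domain), super-coercive *)
Definition legendre_sc (f : V -> R) : Prop :=
  [/\ convex_fun f, (forall x, differentiable f x), strictly_convex_fun f
    & supercoercive f].

Definition standing (phi psi : V -> R) : Prop :=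
  [/\ legendre_sc phi,
      (forall v, (psi v)%:E = fenchel_conj phi v),
      legendre_sc psi,
      (forall x, grad psi (grad phi x) = x)
    & (forall v, grad phi (grad psi v) = v)].

Definition frechet_subgrad (f : V -> R) (x v : V) : Prop :=
  forall eps : R, 0 < eps ->
    \forall y \near x, f x + dotv v (y - x) - eps * `|y - x| <= f y.

Definition limiting_subgrad (f : V -> R) (x v : V) : Prop :=
  exists (xs vs : nat -> V),
    [/\ xs @ \oo --> x, (fun k => f (xs k)) @ \oo --> f x,
        vs @ \oo --> v & forall k, frechet_subgrad f (xs k) (vs k)].

(* a-weak convexity w.r.t. phi (psi = phi^* ) *)
Definition a_weakly_convex (phi psi : V -> R) (f : V -> R) : Prop :=
  forall xb vb : V, limiting_subgrad f xb vb ->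
    forall x : V,
      f xb - phi (x - xb + grad psi (- vb)) + phi (grad psi (- vb)) <= f x.

Definition left_Phi_convex (Phi : V -> V -> R) (f : V -> R) : Prop :=
  exists (I : Type) (y : I -> V) (beta : I -> \bar R),
    forall x : V,
      (f x)%:E = ereal_sup [set ((Phi x (y i))%:E - beta i)%E | i in [set: I]].

End Defs.

(* Main.v *)
Require Import Defs.
From HB Require Import structures.
From mathcomp Require Import all_boot all_order all_algebra.
From mathcomp Require Import all_classical all_reals all_analysis.
From mathcomp Require Import lra.
Import Order.TTheory GRing.Theory Num.Theory.
Set Implicit Arguments. Unset Strict Implicit.
Import numFieldNormedType.Exports.
Local Open Scope classical_set_scope.
Local Open Scope ring_scope.

Section S.
Variables (R : realType) (n : nat).
Local Notation V := 'rV[R]_n.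

Lemma diff_est0 (f : V -> R) x : differentiable f x ->
  forall eps : R, 0 < eps -> \forall h \near (0:V), `|f (h + x) - f x - 'd f x h| <= eps * `|h|.
Proof.
move=> df eps e0.
have /eqadd_some_oP E := diff_locally df.
have := E eps e0.
apply: filterS => h /=.
by rewrite !fctE /= opprD addrA.
Qed.

Lemma dgrad (f : V -> R) x : differentiable f x -> forall h, 'd f x h = dotv (grad f x) h.
Proof.
move=> df h. rewrite {1}[h]row_sum_delta linear_sum /dotv.
apply: eq_bigr => i _. by rewrite linearZ /= mxE mulrC.
Qed.

Lemma dotvBl (u v w : V) : dotv (u - v) w = dotv u w - dotv v w.
Proof. by rewrite /dotv -sumrB; apply: eq_bigr => i _; rewrite !mxE mulrBl. Qed.

Lemma dotvZr (u w : V) a : dotv u (a *: w) = a * dotv u w.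
Proof. by rewrite /dotv mulr_sumr; apply: eq_bigr => i _; rewrite !mxE mulrCA. Qed.

Lemma diff_est (f : V -> R) x : differentiable f x ->
  forall eps : R, 0 < eps -> \forall h \near (0:V), `|f (x + h) - f x - dotv (grad f x) h| <= eps * `|h|.
Proof.
move=> df eps e0; have := diff_est0 df e0.
by apply: filterS => h; rewrite -dgrad // [x + h]addrC.
Qed.

Lemma frechet_of_diff (f : V -> R) x : differentiable f x -> frechet_subgrad f x (grad f x).
Proof.
move=> df eps e0; apply/nbhs0P; have := diff_est df e0.
apply: filterS => h; rewrite [x + h]addrC addrK ler_norml => /andP[H1 H2].
lra.
Qed.

Lemma norm_delta (j : 'I_n) : `|delta_mx 0 j : V| <= 1.
Proof.
rewrite [leLHS]/Num.norm /= mx_normrE; apply: bigmax_le => // -[a b] _ /=.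
by rewrite mxE; case: (_ && _); rewrite ?normr1 ?normr0.
Qed.

Lemma frechet_uniq (f : V -> R) x v : differentiable f x -> frechet_subgrad f x v -> v = grad f x.
Proof.
move=> df fv.
suff : grad f x - v = 0 by move/eqP; rewrite subr_eq0 => /eqP ->.
apply/rowP => j; rewrite [RHS]mxE [LHS]mxE [X in _ + X]mxE.
set w := (X in X = 0).
suff : forall eps, 0 < eps -> `|w| <= eps.
  move=> H; apply/eqP; rewrite -normr_eq0 eq_le normr_ge0 andbT.
  by apply/unstable.ler_gtP => e e0; apply: H.
move=> eps e0.
have e4 : 0 < eps / 4 by rewrite divr_gt0.
have := diff_est df e4.
have := fv _ e4 => /nbhs0P.
move=> H1 H2; have [d d0 Hd] := iffLR nbhs_norm0P (filterI H1 H2).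
have Hd2 : forall t : R, `|t| < d -> t * w >= - (eps / 2) * `|t|.
  move=> t td.
  have ht : `|t *: (delta_mx 0 j : V)| < d.
    rewrite normrZ; apply: le_lt_trans td.
    by rewrite -[leRHS]mulr1 ler_wpM2l // norm_delta.
  have [/= A B] := Hd _ ht.
  move: B; rewrite ler_norml => /andP[B1 B2].
  have N : `|t *: (delta_mx 0 j : V)| <= `|t|.
    by rewrite normrZ -[leRHS]mulr1 ler_wpM2l // norm_delta.
  rewrite [x + _]addrC addrK !dotvZr in A B1 B2.
  have -> : t * w = t * dotv (grad f x) (delta_mx 0 j) - t * dotv v (delta_mx 0 j).
    rewrite /w /dotv -mulrBr; congr (_ * _).
    rewrite -sumrB (bigD1 j) //= big1 ?addr0; first by rewrite !mxE eqxx /= !mulr1.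
    by move=> i ij; rewrite !mxE (negbTE ij) andbF !mulr0 subrr.
  have := ler_wpM2l (ltW e4) N.
  lra.
have d2 : 0 < d / 2 by rewrite divr_gt0.
have hd : `|d/2| < d by rewrite gtr0_norm // ltr_pdivrMr // ltr_pMr //; lra.
have hd' : `|-(d/2)| < d by rewrite normrN.
have := Hd2 _ hd; have := Hd2 _ hd'; rewrite normrN gtr0_norm // => A B.
rewrite ler_norml; apply/andP; split.
  have : (d / 2) * (-eps) <= (d/2) * w by nra.
  by rewrite ler_pM2l //.
have : (d / 2) * w <= (d/2) * eps by nra.
by rewrite ler_pM2l //.
Qed.


Lemma dotvNl (u w : V) : dotv (- u) w = - dotv u w.
Proof. by rewrite -sub0r dotvBl /dotv big1 ?sub0r // => i _; rewrite mxE mul0r. Qed.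

Lemma lim_subgrad (f : V -> R) xb vb : (forall x, differentiable f x) -> continuous (grad f) ->
  limiting_subgrad f xb vb -> vb = grad f xb.
Proof.
move=> fd fgc [xs [vs [Hx _ Hv Hk]]].
have E : vs = grad f \o xs.
  by apply/funext => k /=; apply: frechet_uniq (fd _) (Hk k).
have H2 : vs @ \oo --> grad f xb.
  by rewrite E; apply: cvg_comp Hx (fgc xb).
exact: (cvg_unique _ Hv H2).
Qed.

Lemma T3 (phi f : V -> R) xb : convex_fun phi -> supercoercive phi -> {for xb, continuous f} ->
  exists C, forall z b, (forall x', - phi (x' - z) - b <= f x') ->
     f xb - 1 < - phi (xb - z) - b -> `|xb - z| <= C.
Proof.
move=> cvx sc cf.
have : \forall h \near (0:V), f (xb + h) < f xb + 1.
  have /cvgrPdist_lt /(_ 1 ltr01) := cf.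
  move=> /nbhs0P H; apply: filterS H => h; rewrite ltr_norml => /andP[A B]; lra.
move=> /(iffLR nbhs_norm0P) [d /= d0 Hd].
set rho := d / 2.
have rho0 : 0 < rho by rewrite divr_gt0.
have rhod : rho < d by rewrite /rho; lra.
have [r Hr] := sc (2 / rho + 1).
exists (Num.max r (Num.max rho (phi 0))).
move=> z b H1 H2; rewrite leNgt; apply/negP => Hs.
set w := xb - z in H2 Hs *.
set s := `|w| in Hs.
move: Hs; rewrite !gt_max => /and3P [rs rhos p0s].
have s0 : 0 < s by lra.
set a := rho / s.
have a0 : 0 < a by rewrite divr_gt0.
have as1 : a * s = rho by rewrite /a mulrVK // unitfE gt_eqF.
have a1 : a < 1 by rewrite /a ltr_pdivrMr // mul1r.
have key1 := H1 (xb - a *: w).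
have e1 : xb - a *: w - z = (1 - a) *: w.
  by rewrite addrAC scalerBl scale1r.
rewrite e1 in key1.
have key2 : f (xb - a *: w) < f xb + 1.
  apply: Hd => /=; rewrite normrN normrZ gtr0_norm //.
  by rewrite -/s as1.
have key3 : phi ((1 - a) *: w) <= (1 - a) * phi w + a * phi 0.
  have := cvx w 0 (1 - a).
  have -> : 1 - (1 - a) = a by lra.
  rewrite scaler0 addr0; apply; apply/andP; split; lra.
have key4 : (2 / rho + 1) * s <= phi w := Hr w rs.
have k5 : 2 + rho <= a * phi w.
  have := ler_wpM2l (ltW a0) key4.
  have -> : a * ((2 / rho + 1) * s) = 2 + rho.
    rewrite mulrCA as1 mulrDl mulfVK ?mul1r //; by rewrite gt_eqF.
  by [].
have k6 : a * phi 0 < rho by rewrite -as1 ltr_pM2l.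
lra.
Qed.


Lemma dir1 (phi psi f : V -> R) : C1 f -> a_weakly_convex phi psi f ->
  left_Phi_convex (fun x y : V => - phi (x - y)) f.
Proof.
move=> [fd fgc] aw.
exists V, (fun xb => xb - grad psi (- grad f xb)),
  (fun xb => (- f xb - phi (grad psi (- grad f xb)))%:E).
move=> x; apply/eqP; rewrite eq_le; apply/andP; split.
  apply: ereal_sup_ubound; exists x => //=.
  rewrite -EFinB; congr EFin.
  rewrite opprB addrCA subrr addr0; lra.
apply: ge_ereal_sup => _ [xb _ <-] /=.
rewrite -EFinB lee_fin.
have L : limiting_subgrad f xb (grad f xb).
  exists (fun=> xb), (fun=> grad f xb); split => //; try exact: cvg_cst.
  by move=> _; apply: frechet_of_diff.
have := aw xb (grad f xb) L x.
have -> : x - (xb - grad psi (- grad f xb)) = x - xb + grad psi (- grad f xb).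
  by rewrite opprB addrCA addrC.
lra.
Qed.


Lemma subc_cvg (c ys : V) : (fun u : V => c - u) @ ys --> c - ys.
Proof.
have -> : (fun u : V => c - u) = (fun=> c) - id by apply/funext.
exact: (@cvgB _ V _ (nbhs ys) _ (fun=> c) id c ys (cvg_cst c) cvg_id).
Qed.

Lemma dir2 (phi psi f : V -> R) : standing phi psi -> C1 f ->
  left_Phi_convex (fun x y : V => - phi (x - y)) f -> a_weakly_convex phi psi f.
Proof.
move=> [[phic phid _ phisc] _ _ gpp _] [fd fgc] [I [y [beta Hf]]] xb vb Hl x.
rewrite (lim_subgrad fd fgc Hl).
have phicont : continuous phi by move=> p; apply: differentiable_continuous.
have T1 : forall i b, beta i = b%:E -> forall x', - phi (x' - y i) - b <= f x'.
  move=> i b Hb x'; rewrite -lee_fin Hf EFinB -Hb.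
  by apply: ereal_sup_ubound; exists i.
pose T := fun eps : R => [set z : V | exists i b,
   [/\ y i = z, beta i = b%:E & f xb - eps < - phi (xb - z) - b]].
have T2 : forall eps, 0 < eps -> T eps !=set0.
  move=> eps e0.
  have : ((f xb - eps)%:E < ereal_sup [set ((- phi (xb - y i))%:E - beta i)%E | i in setT])%E.
    by rewrite -Hf lte_fin ltrBlDr ltrDl.
  move=> /ereal_sup_gt [_ [i _ <-]].
  case Eb: (beta i) => [b| |].
  - by move=> H; exists (y i), i, b; split => //; rewrite -lte_fin EFinB.
  - by rewrite /= addeNy.
  - move=> _.
    have : ((- phi (xb - y i))%:E - beta i <= (f xb)%:E)%E.
      by rewrite Hf; apply: ereal_sup_ubound; exists i.
    by rewrite Eb /=.
pose F := filter_from [set e : R | 0 < e] T.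
have FF : ProperFilter F.
  apply: filter_from_proper; last by move=> e; apply: T2.
  apply: filter_from_filter; first by exists 1 => /=.
  move=> e1 e2 /= e10 e20; exists (Num.min e1 e2); first by rewrite /= lt_min e10 e20.
  move=> z [i [b [yi bi Hz]]].
  have m1 : Num.min e1 e2 <= e1 by rewrite ge_min lexx.
  have m2 : Num.min e1 e2 <= e2 by rewrite ge_min lexx orbT.
  by split; exists i, b; split => //; lra.
have [C HC] := T3 phic phisc (differentiable_continuous (fd xb)).
pose r := Num.max C 0 + 1.
have r0 : 0 < r.
  have : 0 <= Num.max C 0 by rewrite le_max lexx orbT.
  rewrite /r; lra.
pose A := closed_ball xb r.
have cA : compact A.
  apply: bounded_closed_compact; last exact: closed_ball_closed.
  exists (`|xb| + r); split; first by rewrite num_real.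
  move=> M HM z; rewrite /A closed_ballE // /closed_ball_ /= => Hz.
  have := ler_normB xb (xb - z).
  rewrite opprB addrCA subrr addr0 => H; lra.
have FA : F A.
  exists 1 => //= z [i [b [yi bi Hz]]].
  rewrite /A closed_ballE // /closed_ball_ /=.
  have := HC z b _ Hz.
  rewrite -yi => /(_ (T1 i b bi)).
  have : C <= Num.max C 0 by rewrite le_max lexx.
  rewrite /r; lra.
have [ys [_ Hcl]] := cA F FF FA.
have T4 : forall x', phi (xb - ys) - phi (x' - ys) <= f x' - f xb.
  move=> x'; apply/ler_addgt0Pr => e e0.
  have cG : (fun u => phi (xb - u) - phi (x' - u)) @ ys --> (phi (xb - ys) - phi (x' - ys)).
    have -> : (fun u => phi (xb - u) - phi (x' - u)) =
      (phi \o (fun u => xb - u)) - (phi \o (fun u => x' - u)) by apply/funext.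
    have H1 := cvg_comp _ _ (@subc_cvg xb ys) (phicont _).
    have H2 := cvg_comp _ _ (@subc_cvg x' ys) (phicont _).
    exact: (cvgB H1 H2).
  have e2 : 0 < e / 2 by rewrite divr_gt0.
  have /cvgrPdist_lt /(_ _ e2) N := cG.
  have FT : F (T (e / 2)) by exists (e / 2).
  have [u [[i [b [yi bi Hu]]] Hn]] := Hcl _ _ FT N.
  have := T1 i b bi x'; rewrite yi => H.
  move: Hn; rewrite ltr_norml => /andP[H1 H2].
  lra.
have T5 : frechet_subgrad f xb (- grad phi (xb - ys)).
  move=> eps e0; apply/nbhs0P.
  have := diff_est (phid (xb - ys)) e0.
  apply: filterS => h; rewrite ler_norml => /andP[A1 A2].
  have := T4 (xb + h).
  rewrite (addrAC xb h (- ys)) (addrC xb h) addrK dotvNl.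
  lra.
have E5 := frechet_uniq (fd xb) T5.
rewrite -E5 opprK gpp addrA subrK.
have := T4 x; lra.
Qed.


End S.

Unset Implicit Arguments.

Theorem mainTheorem12 (R : realType) (n : nat) (phi psi f : 'rV[R]_n -> R) :
  standing phi psi -> C1 f ->
  (a_weakly_convex phi psi f <->
   left_Phi_convex (fun x y : 'rV[R]_n => - phi (x - y)) f).
Proof.
move=> st c1; split; first exact: dir1.
exact: dir2.
Qed.
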